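(* Let $f,g,h$ be nonnegative continuous functions on $[0,1]$, differentiable on $(0,1)$, positive on $(0,1]$, with $F=\log f$, $G=\log g$, $H=\log h$ such that $F'(x)\neq 0$ on $(0,1)$ and $F(x)\neq F(y)$ for $x\neq y$. Assume one of the following: (I) $(f,g)$ and $(f,h)$ are both CLI monotone pairs and $$1+\frac{G(y)-G(x)}{F(y)-F(x)}\le \frac{H(y)-H(x)}{F(y)-F(x)}\quad\text{for all } x<y;$$ (II) $(f,g)$ is a CLI monotone pair, $(f,h)$ is a CLI anti-monotone pair, and $$1+\frac{G(y)-G(x)}{F(y)-F(x)}+\frac{H(y)-H(x)}{F(y)-F(x)}\ge 0\quad\text{for all } x<y.$$ Then for every $\rho\in M_{n,+,1}(\mathbb{C})$ and all $A,B\in M_{n,sa}(\mathbb{C})$, $$U_{\rho,(f,g,h)}(A)\,U_{\rho,(f,g,h)}(B)\ \ge\ \beta(f,g,h)\,\big|\mathrm{Tr}[f(\rho)g(\rho)h(\rho)[A,B]]\big|^2 .$$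
   Context: $M_{n,sa}(\mathbb{C})$ denotes the $n\times n$ self-adjoint complex matrices and $M_{n,+,1}(\mathbb{C})=\{\rho\in M_n(\mathbb{C}):\rho>0,\ \mathrm{Tr}\rho=1\}$ the strictly positive density matrices; $f(\rho)$ etc. denote functional calculus. $[X,Y]=XY-YX$, $\{X,Y\}=XY+YX$. For $H\in M_{n,sa}(\mathbb{C})$ put $H_0=H-\mathrm{Tr}[\rho H]I$, and define $I_{\rho,(f,g,h)}(H)=\tfrac12\mathrm{Tr}[(i[f(\rho),H_0])(i[g(\rho),H_0])h(\rho)]$, $J_{\rho,(f,g,h)}(H)=\tfrac12\mathrm{Tr}[\{f(\rho),H_0\}\{g(\rho),H_0\}h(\rho)]$, $U_{\rho,(f,g,h)}(H)=\sqrt{I_{\rho,(f,g,h)}(H)J_{\rho,(f,g,h)}(H)}$. A pair $(f,g)$ of nonnegative continuous functions on $[0,1]$, differentiable on $(0,1)$, with $F=\log f$, $G=\log g$, is a CLI monotone pair if (a) $(f(x)-f(y))(g(x)-g(y))\ge 0$ for all $x,y\in[0,1]$ and (b) $0\le \inf_{0<x<1}G'(x)/F'(x)\le\sup_{0<x<1}G'(x)/F'(x)<\infty$; it is a CLI anti-monotone pair if (a) $(f(x)-f(y))(g(x)-g(y))\le 0$ for all $x,y$ and (b) $-\infty<\inf_{0<x<1}G'(x)/F'(x)\le\sup_{0<x<1}G'(x)/F'(x)\le 0$. With $m=\inf_{0<x<1}G'/F'$, $M=\sup_{0<x<1}G'/F'$, $n=\inf_{0<x<1}H'/F'$, $N=\sup_{0<x<1}H'/F'$,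 define $$\beta(f,g,h)=\min\Big\{\frac{m}{(1+m+n)^2},\frac{m}{(1+m+N)^2},\frac{M}{(1+M+n)^2},\frac{M}{(1+M+N)^2}\Big\}.$$ *)

(* Defs.v *)
(* classical reals (Stdlib Reals), complex numbers built as
   pairs of reals, n x n complex matrices as functions nat -> nat -> C
   (only indices < n are ever used). *)
From Stdlib Require Import Reals.
Open Scope R_scope.

Record C := mkC { Re : R ; Im : R }.
Definition RtoC (r : R) : C := mkC r 0.
Definition C0 : C := RtoC 0.
Definition C1 : C := RtoC 1.
Definition Ci : C := mkC 0 1.
Definition Cadd (a b : C) : C := mkC (Re a + Re b) (Im a + Im b).
Definition Copp (a : C) : C := mkC (- Re a) (- Im a).
Definition Cmul (a b : C) : C :=
  mkC (Re a * Re b - Im a * Im b) (Re a * Im b + Im a * Re b).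
Definition Cconj (a : C) : C := mkC (Re a) (- Im a).
Definition Cnorm2 (a : C) : R := Re a * Re a + Im a * Im a.

Fixpoint csum (n : nat) (f : nat -> C) : C :=
  match n with O => C0 | S k => Cadd (csum k f) (f k) end.
Fixpoint rsum (n : nat) (f : nat -> R) : R :=
  match n with O => 0 | S k => rsum k f + f k end.

Definition Mat := nat -> nat -> C.
Definition mid : Mat := fun i j => if Nat.eqb i j then C1 else C0.
Definition madd (A B : Mat) : Mat := fun i j => Cadd (A i j) (B i j).
Definition msub (A B : Mat) : Mat := fun i j => Cadd (A i j) (Copp (B i j)).
Definition mscale (c : C) (A : Mat) : Mat := fun i j => Cmul c (A i j).
Definition mmul (n : nat) (A B : Mat) : Mat :=
  fun i j => csum n (fun k => Cmul (A i k) (B k j)).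
Definition madj (A : Mat) : Mat := fun i j => Cconj (A j i).
Definition mtr (n : nat) (A : Mat) : C := csum n (fun i => A i i).
Definition mcomm (n : nat) (A B : Mat) : Mat := msub (mmul n A B) (mmul n B A).
Definition manticomm (n : nat) (A B : Mat) : Mat := madd (mmul n A B) (mmul n B A).
Definition diagm (d : nat -> R) : Mat :=
  fun i j => if Nat.eqb i j then RtoC (d i) else C0.

Definition selfadjoint (n : nat) (A : Mat) : Prop :=
  forall i j, (i < n)%nat -> (j < n)%nat -> A i j = Cconj (A j i).
Definition unitary (n : nat) (U : Mat) : Prop :=
  forall i j, (i < n)%nat -> (j < n)%nat ->
    mmul n U (madj U) i j = mid i j /\ mmul n (madj U) U i j = mid i j.

(* Functional calculus: if rho = U diag(lam) U^*, then
   phi(rho) = U diag(phi(lam_k)) U^*. *)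
Definition fcalc (n : nat) (U : Mat) (lam : nat -> R) (phi : R -> R) : Mat :=
  mmul n (mmul n U (diagm (fun k => phi (lam k)))) (madj U).

(* Spectral data of a strictly positive density matrix rho = U diag(lam) U^*:
   U unitary, all eigenvalues > 0, trace 1.  Every rho in M_{n,+,1}(C)
   arises this way. *)
Definition density_spectral (n : nat) (U : Mat) (lam : nat -> R) : Prop :=
  unitary n U /\ (forall k, (k < n)%nat -> 0 < lam k) /\ rsum n lam = 1.

Definition centered (n : nat) (rho H : Mat) : Mat :=
  msub H (mscale (mtr n (mmul n rho H)) mid).

(* I_{rho,(f,g,h)}(H), J_{rho,(f,g,h)}(H) (these traces are real; we take the
   real part), U = sqrt(I J).  fr, gr, hr stand for f(rho), g(rho), h(rho). *)
Definition Ifun (n : nat) (rho fr gr hr H : Mat) : R :=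
  let H0 := centered n rho H in
  / 2 * Re (mtr n (mmul n (mmul n (mscale Ci (mcomm n fr H0))
                                   (mscale Ci (mcomm n gr H0))) hr)).
Definition Jfun (n : nat) (rho fr gr hr H : Mat) : R :=
  let H0 := centered n rho H in
  / 2 * Re (mtr n (mmul n (mmul n (manticomm n fr H0) (manticomm n gr H0)) hr)).
Definition Ufun (n : nat) (rho fr gr hr H : Mat) : R :=
  sqrt (Ifun n rho fr gr hr H * Jfun n rho fr gr hr H).

Definition is_inf (E : R -> Prop) (m : R) : Prop :=
  (forall y, E y -> m <= y) /\ (forall b, (forall y, E y -> b <= y) -> b <= m).
Definition is_sup (E : R -> Prop) (M : R) : Prop :=
  (forall y, E y -> y <= M) /\ (forall b, (forall y, E y -> y <= b) -> M <= b).

Definition logf (f : R -> R) : R -> R := fun x => ln (f x).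

Definition deriv_ratios (F G : R -> R) : R -> Prop :=
  fun r => exists x a b, 0 < x < 1 /\ derivable_pt_lim F x a /\
                         derivable_pt_lim G x b /\ r = b / a.

Definition admissible (f : R -> R) : Prop :=
  (forall x, 0 <= x <= 1 -> 0 <= f x) /\
  (forall x, 0 <= x <= 1 -> limit1_in f (fun y => 0 <= y <= 1) (f x) x) /\
  (forall x, 0 < x < 1 -> exists l, derivable_pt_lim f x l).

Definition CLI_monotone (f g : R -> R) : Prop :=
  (forall x y, 0 <= x <= 1 -> 0 <= y <= 1 -> 0 <= (f x - f y) * (g x - g y)) /\
  exists m M, is_inf (deriv_ratios (logf f) (logf g)) m /\
              is_sup (deriv_ratios (logf f) (logf g)) M /\ 0 <= m.

Definition CLI_antimonotone (f g : R -> R) : Prop :=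
  (forall x y, 0 <= x <= 1 -> 0 <= y <= 1 -> (f x - f y) * (g x - g y) <= 0) /\
  exists m M, is_inf (deriv_ratios (logf f) (logf g)) m /\
              is_sup (deriv_ratios (logf f) (logf g)) M /\ M <= 0.

Definition beta (m M n N : R) : R :=
  Rmin (Rmin (m / (1 + m + n) ^ 2) (m / (1 + m + N) ^ 2))
       (Rmin (M / (1 + M + n) ^ 2) (M / (1 + M + N) ^ 2)).

(* Main.v *)
From Coquelicot Require Import Coquelicot.
From Stdlib Require Import Reals Lra Lia Setoid Morphisms FunctionalExtensionality Arith.
Require Import Defs.
Open Scope R_scope.

Lemma mono_lemma (f df : R -> R) (a b : R) :
  (forall x, a <= x <= b -> is_derive f x (df x)) ->
  (forall x, a <= x <= b -> 0 <= df x) -> a <= b -> f a <= f b.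
Proof.
  intros Hd Hp Hab.
  destruct (MVT_gen f a b df) as [c [Hc Heq]].
  - intros x Hx. apply Hd. rewrite Rmin_left in Hx by lra. rewrite Rmax_right in Hx by lra. lra.
  - intros x Hx. rewrite Rmin_left in Hx by lra. rewrite Rmax_right in Hx by lra.
    apply derivable_continuous_pt. exists (df x). apply is_derive_Reals. apply Hd. lra.
  - rewrite Rmin_left in Hc by lra. rewrite Rmax_right in Hc by lra.
    assert (0 <= df c) by (apply Hp; lra). nra.
Qed.

Lemma sinh_eq x : sinh x = (exp x - exp (- x)) / 2. Proof. reflexivity. Qed.
Lemma cosh_eq x : cosh x = (exp x + exp (- x)) / 2. Proof. reflexivity. Qed.

Lemma is_derive_sinh x : is_derive sinh x (cosh x).
Proof. unfold sinh, cosh. auto_derive; auto. lra. Qed.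
Lemma is_derive_cosh x : is_derive cosh x (sinh x).
Proof. unfold sinh, cosh. auto_derive; auto. lra. Qed.

Lemma sinh_nonneg x : 0 <= x -> 0 <= sinh x.
Proof. intros H. destruct (Req_dec x 0). subst. rewrite sinh_0. lra.
  rewrite <- sinh_0. left. apply sinh_lt. lra. Qed.

Lemma sinh_opp x : sinh (- x) = - sinh x.
Proof. unfold sinh. rewrite Ropp_involutive. lra. Qed.
Lemma cosh_opp x : cosh (- x) = cosh x.
Proof. unfold cosh. rewrite Ropp_involutive. lra. Qed.

Lemma cosh_ge1 x : 1 <= cosh x.
Proof. unfold cosh. rewrite exp_Ropp. assert (h := exp_pos x).
  set (a := exp x) in *.
  assert (E : (a + / a) / 2 = ((a-1)^2/(2*a)) + 1) by (field; lra).
  rewrite E. assert (0 <= (a-1)^2/(2*a)). unfold Rdiv; apply Rmult_le_pos; [apply pow2_ge_0 | left; apply Rinv_0_lt_compat; lra]. lra. Qed.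

Lemma cosh_mono s r : 0 <= s <= r -> cosh s <= cosh r.
Proof. intros H. apply (mono_lemma cosh sinh s r); try lra.
  intros; apply is_derive_cosh. intros; apply sinh_nonneg; lra. Qed.

Lemma phi1 x : 0 <= x -> sinh x <= x * cosh x.
Proof. intros H.
  assert (0 * cosh 0 - sinh 0 <= x * cosh x - sinh x); [|rewrite sinh_0 in H0; lra].
  apply (mono_lemma (fun z => z * cosh z - sinh z) (fun z => z * sinh z)); try lra.
  - intros z _. unfold sinh, cosh. auto_derive; auto. lra.
  - intros z Hz. assert (0 <= sinh z) by (apply sinh_nonneg; lra). nra.
Qed.

Lemma keyA s r : 0 <= s <= r -> r * sinh s <= s * sinh r.
Proof. intros H.
  assert (s * sinh s - s * sinh s <= s * sinh r - r * sinh s); [|lra].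
  apply (mono_lemma (fun z => s * sinh z - z * sinh s) (fun z => s * cosh z - sinh s)); try lra.
  - intros z _. unfold sinh, cosh. auto_derive; auto. lra.
  - intros z Hz. assert (cosh s <= cosh z) by (apply cosh_mono; lra).
    assert (sinh s <= s * cosh s) by (apply phi1; lra). nra.
Qed.

Lemma sinh_add a b : sinh (a + b) = sinh a * cosh b + cosh a * sinh b.
Proof. unfold sinh, cosh. rewrite Ropp_plus_distr, !exp_plus. lra. Qed.

Lemma sinh_sub a b : sinh (a - b) = sinh a * cosh b - cosh a * sinh b.
Proof. unfold Rminus. rewrite sinh_add, sinh_opp, cosh_opp. lra. Qed.

Lemma sinh_prod u mu : sinh (2*u) * sinh (2*(mu*u)) =
  sinh ((1+mu)*u) ^ 2 - sinh ((1-mu)*u) ^ 2.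
Proof.
  replace (2*u) with (u+u) by ring. replace (2*(mu*u)) with (mu*u+mu*u) by ring.
  replace ((1+mu)*u) with (u + mu*u) by ring. replace ((1-mu)*u) with (u - mu*u) by ring.
  rewrite !sinh_add, sinh_sub.
  unfold sinh, cosh. rewrite !exp_Ropp.
  assert (h1 := exp_pos u). assert (h2 := exp_pos (mu*u)).
  field; lra.
Qed.

Lemma sq_abs_sinh z : sinh (Rabs z) ^ 2 = sinh z ^ 2.
Proof. unfold Rabs. destruct (Rcase_abs z). rewrite sinh_opp. ring. ring. Qed.

Lemma step1 u mu : 0 <= mu ->
  4 * mu * sinh ((1+mu)*u) ^ 2 <= (1+mu)^2 * (sinh (2*u) * sinh (2*(mu*u))).
Proof. intros Hmu. rewrite sinh_prod.
  assert (Hk : (1+mu)^2 * sinh ((1-mu)*u)^2 <= (1-mu)^2 * sinh ((1+mu)*u)^2).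
  { set (r := Rabs ((1+mu)*u)). set (s := Rabs ((1-mu)*u)).
    assert (Hs : 0 <= s <= r).
    { unfold r, s. rewrite !Rabs_mult. split. apply Rmult_le_pos; apply Rabs_pos.
      apply Rmult_le_compat_r. apply Rabs_pos.
      rewrite (Rabs_right (1+mu)) by lra. unfold Rabs; destruct Rcase_abs; lra. }
    assert (H := keyA s r Hs).
    assert (0 <= sinh s) by (apply sinh_nonneg; lra).
    assert (Hsq : (r * sinh s)^2 <= (s * sinh r)^2) by (apply pow_incr; nra).
    rewrite <- (sq_abs_sinh ((1-mu)*u)), <- (sq_abs_sinh ((1+mu)*u)). fold r s.
    assert (r^2 = (1+mu)^2 * u^2) by (unfold r; rewrite pow2_abs; ring).
    assert (s^2 = (1-mu)^2 * u^2) by (unfold s; rewrite pow2_abs; ring).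
    destruct (Req_dec u 0) as [->|Hu].
    - subst r s. rewrite !Rmult_0_r, Rabs_R0, sinh_0. lra.
    - assert (0 < u^2) by (apply pow2_gt_0; auto).
      apply Rmult_le_reg_r with (u^2); auto.
      replace ((1 + mu) ^ 2 * sinh s ^ 2 * u ^ 2) with (r ^ 2 * sinh s ^ 2) by (rewrite H1; ring).
      replace ((1 - mu) ^ 2 * sinh r ^ 2 * u ^ 2) with (s ^ 2 * sinh r ^ 2) by (rewrite H2; ring).
      nra. }
  nra.
Qed.

Lemma step2_pos u mu nu : 0 <= u -> 0 <= mu ->
  (1+mu <= nu \/ (nu <= 0 /\ 0 <= 1+mu+nu)) ->
  (1+mu)^2 * sinh ((1+mu+nu)*u)^2 <= (1+mu+nu)^2 * cosh (nu*u)^2 * sinh ((1+mu)*u)^2.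
Proof. intros Hu Hmu Hc.
  destruct (Req_dec u 0) as [->|Hu0].
  { rewrite !Rmult_0_r, sinh_0. lra. }
  assert (Hup : 0 < u) by lra.
  assert (Hch := cosh_ge1 (nu*u)).
  assert (Hmain : 0 <= (1+mu) * sinh ((1+mu+nu)*u) <= (1+mu+nu) * cosh (nu*u) * sinh ((1+mu)*u)).
  2:{ destruct Hmain. assert (((1+mu) * sinh ((1+mu+nu)*u))^2 <= ((1+mu+nu) * cosh (nu*u) * sinh ((1+mu)*u))^2) by (apply pow_incr; lra). nra. }
  destruct Hc as [Hc|[Hc1 Hc2]].
  - assert (Hs : 0 <= sinh ((1+mu+nu)*u)) by (apply sinh_nonneg; nra).
    split. apply Rmult_le_pos; lra.
    set (a := (1+mu)*u). set (b := nu*u).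
    assert (HA := keyA (b-a) (b+a) ltac:(unfold a,b; nra)).
    rewrite sinh_add, sinh_sub in HA.
    replace ((1+mu+nu)*u) with (a+b) by (unfold a,b; ring). rewrite sinh_add.
    assert (a * sinh b * cosh a <= b * cosh b * sinh a) by nra.
    assert (Hkey : (1+mu) * cosh a * sinh b <= nu * cosh b * sinh a).
    { apply Rmult_le_reg_l with u; auto. unfold a, b in *. nra. }
    nra.
  - assert (HA := keyA ((1+mu+nu)*u) ((1+mu)*u) ltac:(nra)).
    assert (Hs : 0 <= sinh ((1+mu+nu)*u)) by (apply sinh_nonneg; nra).
    assert (Hs2 : 0 <= sinh ((1+mu)*u)) by (apply sinh_nonneg; nra).
    split. apply Rmult_le_pos; lra.
    assert (H1 : (1+mu) * sinh ((1+mu+nu)*u) <= (1+mu+nu) * sinh ((1+mu)*u)).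
    { apply Rmult_le_reg_l with u; auto. nra. }
    assert (0 <= (1+mu+nu) * sinh ((1+mu)*u)) by (apply Rmult_le_pos; lra).
    nra.
Qed.

Lemma step2 u mu nu : 0 <= mu ->
  (1+mu <= nu \/ (nu <= 0 /\ 0 <= 1+mu+nu)) ->
  (1+mu)^2 * sinh ((1+mu+nu)*u)^2 <= (1+mu+nu)^2 * cosh (nu*u)^2 * sinh ((1+mu)*u)^2.
Proof. intros Hmu Hc. destruct (Rle_dec 0 u). apply step2_pos; auto.
  assert (H := step2_pos (-u) mu nu ltac:(lra) Hmu Hc).
  replace ((1+mu+nu)*(-u)) with (-((1+mu+nu)*u)) in H by ring.
  replace (nu*(-u)) with (-(nu*u)) in H by ring.
  replace ((1+mu)*(-u)) with (-((1+mu)*u)) in H by ring.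
  rewrite !sinh_opp, cosh_opp in H. nra.
Qed.

Lemma core u mu nu : 0 <= mu ->
  (1+mu <= nu \/ (nu <= 0 /\ 0 <= 1+mu+nu)) ->
  4 * mu * sinh ((1+mu+nu)*u)^2 <= (1+mu+nu)^2 * (sinh (2*u) * sinh (2*(mu*u))) * cosh (nu*u)^2.
Proof. intros Hmu Hc.
  assert (H1 := step1 u mu Hmu). assert (H2 := step2 u mu nu Hmu Hc).
  assert (0 < (1+mu)^2) by nra.
  apply Rmult_le_reg_l with ((1+mu)^2); auto.
  assert (HC : 0 <= cosh (nu*u)^2) by apply pow2_ge_0.
  assert (HQ : 0 <= (1+mu+nu)^2) by apply pow2_ge_0.
  set (K := (1+mu)^2) in *. set (S := sinh ((1 + mu + nu) * u)^2) in *.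
  set (C := cosh (nu * u) ^ 2) in *. set (P := sinh (2 * u) * sinh (2 * (mu * u))) in *.
  set (T := sinh ((1 + mu) * u) ^ 2) in *. set (Q := (1 + mu + nu) ^ 2) in *.
  assert (E1 : 4*mu*(K*S) <= 4*mu*(Q*C*T)) by (apply Rmult_le_compat_l; lra).
  assert (E2 : Q*C*(4*mu*T) <= Q*C*(K*P)) by (apply Rmult_le_compat_l; [apply Rmult_le_pos|]; lra).
  replace (K * (4 * mu * S)) with (4*mu*(K*S)) by ring.
  replace (K * (Q * P * C)) with (Q*C*(K*P)) by ring.
  replace (4*mu*(Q*C*T)) with (Q*C*(4*mu*T)) in E1 by ring. lra.
Qed.

Lemma exp2m1 z : exp (2*z) - 1 = 2 * exp z * sinh z.
Proof. unfold sinh. rewrite exp_Ropp. replace (2*z) with (z+z) by ring. rewrite exp_plus.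
  assert (h := exp_pos z). field. lra. Qed.
Lemma exp2p1 z : exp (2*z) + 1 = 2 * exp z * cosh z.
Proof. unfold cosh. rewrite exp_Ropp. replace (2*z) with (z+z) by ring. rewrite exp_plus.
  assert (h := exp_pos z). field. lra. Qed.

Lemma analytic t mu nu : 0 <= mu ->
  (1+mu <= nu \/ (nu <= 0 /\ 0 <= 1+mu+nu)) ->
  16 * mu * (exp ((1+mu+nu)*t) - 1)^2 <=
  (1+mu+nu)^2 * (exp (2*t) - 1) * (exp (2*(mu*t)) - 1) * (exp (nu*t) + 1)^2.
Proof. intros Hmu Hc. set (u := t/2).
  replace ((1+mu+nu)*t) with (2*((1+mu+nu)*u)) by (unfold u; field).
  replace (2*t) with (2*(2*u)) by (unfold u; field).
  replace (2*(mu*t)) with (2*(2*(mu*u))) by (unfold u; field).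
  replace (nu*t) with (2*(nu*u)) by (unfold u; field).
  rewrite !exp2m1, exp2p1.
  assert (E : exp ((1+mu+nu)*u) ^2 = exp (2*u) * exp (2*(mu*u)) * exp (nu*u)^2).
  { simpl. rewrite !Rmult_1_r, <- !exp_plus. f_equal. ring. }
  assert (Hc' := core u mu nu Hmu Hc).
  assert (0 <= exp ((1+mu+nu)*u) ^2) by apply pow2_ge_0.
  replace ((1 + mu + nu) ^ 2 * (2 * exp (2 * u) * sinh (2 * u)) *
     (2 * exp (2 * (mu * u)) * sinh (2 * (mu * u))) * (2 * exp (nu * u) * cosh (nu * u)) ^ 2)
   with (16 * (exp (2*u) * exp (2*(mu*u)) * exp (nu*u)^2) *
     ((1+mu+nu)^2 * (sinh (2*u) * sinh (2*(mu*u))) * cosh (nu*u)^2)) by ring.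
  rewrite <- E.
  replace (16 * mu * (2 * exp ((1 + mu + nu) * u) * sinh ((1 + mu + nu) * u)) ^ 2) with
    (16 * exp ((1+mu+nu)*u) ^2 * (4 * mu * sinh ((1+mu+nu)*u)^2)) by ring.
  apply Rmult_le_compat_l; lra.
Qed.

Lemma Ceq a b : Re a = Re b -> Im a = Im b -> a = b.
Proof. destruct a, b; simpl; intros; subst; auto. Qed.

Definition Csub a b := Cadd a (Copp b).

Lemma Cring : ring_theory C0 C1 Cadd Cmul Csub Copp (@eq C).
Proof. constructor; intros; apply Ceq; unfold Csub, C0, C1, RtoC; simpl; ring. Qed.
Add Ring Cring : Cring.

Lemma csum_ext n f g : (forall k, (k < n)%nat -> f k = g k) -> csum n f = csum n g.
Proof. induction n; simpl; intros H; auto. rewrite IHn, H; auto. Qed.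
Lemma rsum_ext n f g : (forall k, (k < n)%nat -> f k = g k) -> rsum n f = rsum n g.
Proof. induction n; simpl; intros H; auto. rewrite IHn, H; auto. Qed.

Lemma csum_add n f g : csum n (fun k => Cadd (f k) (g k)) = Cadd (csum n f) (csum n g).
Proof. induction n; simpl. unfold C0, RtoC; apply Ceq; simpl; ring. rewrite IHn. ring. Qed.
Lemma csum_opp n f : csum n (fun k => Copp (f k)) = Copp (csum n f).
Proof. induction n; simpl. unfold C0, RtoC; apply Ceq; simpl; ring. rewrite IHn. ring. Qed.
Lemma csum_mul_l n c f : csum n (fun k => Cmul c (f k)) = Cmul c (csum n f).
Proof. induction n; simpl. unfold C0, RtoC; apply Ceq; simpl; ring. rewrite IHn. ring. Qed.
Lemma csum_mul_r n c f : csum n (fun k => Cmul (f k) c) = Cmul (csum n f) c.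
Proof. induction n; simpl. unfold C0, RtoC; apply Ceq; simpl; ring. rewrite IHn. ring. Qed.
Lemma csum_zero n f : (forall k, (k < n)%nat -> f k = C0) -> csum n f = C0.
Proof. induction n; simpl; intros H; auto. rewrite IHn, H; auto. ring. Qed.
Lemma csum_swap n m (f : nat -> nat -> C) :
  csum n (fun i => csum m (fun j => f i j)) = csum m (fun j => csum n (fun i => f i j)).
Proof. induction n; simpl. rewrite csum_zero; auto.
  rewrite IHn. rewrite <- csum_add. reflexivity. Qed.
Lemma csum_conj n f : Cconj (csum n f) = csum n (fun k => Cconj (f k)).
Proof. induction n; simpl. apply Ceq; unfold C0, RtoC; simpl; ring.
  rewrite <- IHn. apply Ceq; simpl; ring. Qed.

Lemma rsum_swap n m (f : nat -> nat -> R) :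
  rsum n (fun i => rsum m (fun j => f i j)) = rsum m (fun j => rsum n (fun i => f i j)).
Proof. induction n; simpl.
  - induction m; simpl; auto. rewrite <- IHm. ring.
  - rewrite IHn. clear IHn. induction m; simpl. ring. rewrite <- IHm. ring. Qed.

Lemma Re_csum n f : Re (csum n f) = rsum n (fun k => Re (f k)).
Proof. induction n; simpl; auto. rewrite IHn. auto. Qed.

Lemma csum_delta n i F : (i < n)%nat ->
  csum n (fun k => if Nat.eqb i k then F k else C0) = F i.
Proof. induction n; intros Hi. lia. simpl.
  destruct (Nat.eq_dec i n) as [->|Hne].
  - rewrite Nat.eqb_refl. rewrite csum_zero. ring.
    intros k Hk. destruct (Nat.eqb_spec n k). lia. auto.
  - rewrite IHn by lia. destruct (Nat.eqb_spec i n). lia. ring.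
Qed.

Record meq (n : nat) (X Y : Mat) : Prop := MEq
  { meq_ap : forall i j, (i < n)%nat -> (j < n)%nat -> X i j = Y i j }.
Arguments meq_ap {n X Y}.

#[global] Instance meq_equiv n : Equivalence (meq n).
Proof. constructor.
  - intros X; constructor; intros i j _ _; auto.
  - intros X Y H; constructor; intros i j Hi Hj; symmetry; apply H; auto.
  - intros X Y Z H1 H2; constructor; intros i j Hi Hj; rewrite (meq_ap H1), (meq_ap H2); auto. Qed.

#[global] Instance mmul_proper n : Proper (meq n ==> meq n ==> meq n) (mmul n).
Proof. intros X X' HX Y Y' HY; constructor; intros i j Hi Hj. unfold mmul. apply csum_ext.
  intros k Hk. rewrite (meq_ap HX), (meq_ap HY); auto. Qed.
#[global] Instance madd_proper n : Proper (meq n ==> meq n ==> meq n) madd.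
Proof. intros X X' HX Y Y' HY; constructor; intros i j Hi Hj. unfold madd. rewrite (meq_ap HX), (meq_ap HY); auto. Qed.
#[global] Instance msub_proper n : Proper (meq n ==> meq n ==> meq n) msub.
Proof. intros X X' HX Y Y' HY; constructor; intros i j Hi Hj. unfold msub. rewrite (meq_ap HX), (meq_ap HY); auto. Qed.
#[global] Instance mscale_proper n c : Proper (meq n ==> meq n) (mscale c).
Proof. intros X X' HX; constructor; intros i j Hi Hj. unfold mscale. rewrite (meq_ap HX); auto. Qed.
#[global] Instance madj_proper n : Proper (meq n ==> meq n) madj.
Proof. intros X X' HX; constructor; intros i j Hi Hj. unfold madj. rewrite (meq_ap HX); auto. Qed.
#[global] Instance mcomm_proper n : Proper (meq n ==> meq n ==> meq n) (mcomm n).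
Proof. intros X X' HX Y Y' HY. unfold mcomm. rewrite HX, HY. reflexivity. Qed.
#[global] Instance manticomm_proper n : Proper (meq n ==> meq n ==> meq n) (manticomm n).
Proof. intros X X' HX Y Y' HY. unfold manticomm. rewrite HX, HY. reflexivity. Qed.
#[global] Instance mtr_proper n : Proper (meq n ==> eq) (mtr n).
Proof. intros X X' HX. unfold mtr. apply csum_ext. intros k Hk. apply (meq_ap HX); auto. Qed.

Lemma mmul_assoc n X Y Z : mmul n (mmul n X Y) Z = mmul n X (mmul n Y Z).
Proof. extensionality i; extensionality j. unfold mmul.
  transitivity (csum n (fun k => csum n (fun l => Cmul (X i l) (Cmul (Y l k) (Z k j))))).
  - apply csum_ext; intros k _. rewrite <- csum_mul_r. apply csum_ext; intros; ring.
  - rewrite csum_swap. apply csum_ext; intros l _. rewrite <- csum_mul_l. reflexivity. Qed.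

Lemma mmul_mid_l n X : meq n (mmul n mid X) X.
Proof. constructor; intros i j Hi Hj. unfold mmul, mid.
  rewrite <- (csum_delta n i (fun k => X k j)) by auto. apply csum_ext; intros k _.
  destruct (Nat.eqb i k); unfold C1, C0, RtoC; apply Ceq; simpl; ring. Qed.
Lemma mmul_mid_r n X : meq n (mmul n X mid) X.
Proof. constructor; intros i j Hi Hj. unfold mmul, mid.
  rewrite <- (csum_delta n j (fun k => X i k)) by auto. apply csum_ext; intros k _.
  rewrite Nat.eqb_sym. destruct (Nat.eqb j k); unfold C1, C0, RtoC; apply Ceq; simpl; ring. Qed.

Lemma mtr_comm n X Y : mtr n (mmul n X Y) = mtr n (mmul n Y X).
Proof. unfold mtr, mmul. rewrite csum_swap. apply csum_ext; intros; apply csum_ext; intros; ring. Qed.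

Lemma madj_mmul n X Y : madj (mmul n X Y) = mmul n (madj Y) (madj X).
Proof. extensionality i; extensionality j. unfold madj, mmul. rewrite csum_conj.
  apply csum_ext; intros. apply Ceq; simpl; ring. Qed.
Lemma madj_madj X : madj (madj X) = X.
Proof. extensionality i; extensionality j. unfold madj. destruct (X i j); unfold Cconj; simpl.
  f_equal; ring. Qed.

Lemma mmul_msub_l n X Y Z : mmul n (msub X Y) Z = msub (mmul n X Z) (mmul n Y Z).
Proof. extensionality i; extensionality j. unfold mmul, msub.
  rewrite <- csum_opp, <- csum_add. apply csum_ext; intros; ring. Qed.
Lemma mmul_msub_r n X Y Z : mmul n X (msub Y Z) = msub (mmul n X Y) (mmul n X Z).
Proof. extensionality i; extensionality j. unfold mmul, msub.
  rewrite <- csum_opp, <- csum_add. apply csum_ext; intros; ring. Qed.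
Lemma mmul_madd_l n X Y Z : mmul n (madd X Y) Z = madd (mmul n X Z) (mmul n Y Z).
Proof. extensionality i; extensionality j. unfold mmul, madd.
  rewrite <- csum_add. apply csum_ext; intros; ring. Qed.
Lemma mmul_madd_r n X Y Z : mmul n X (madd Y Z) = madd (mmul n X Y) (mmul n X Z).
Proof. extensionality i; extensionality j. unfold mmul, madd.
  rewrite <- csum_add. apply csum_ext; intros; ring. Qed.
Lemma mmul_mscale_l n c X Y : mmul n (mscale c X) Y = mscale c (mmul n X Y).
Proof. extensionality i; extensionality j. unfold mmul, mscale.
  rewrite <- csum_mul_l. apply csum_ext; intros; ring. Qed.
Lemma mmul_mscale_r n c X Y : mmul n X (mscale c Y) = mscale c (mmul n X Y).
Proof. extensionality i; extensionality j. unfold mmul, mscale.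
  rewrite <- csum_mul_l. apply csum_ext; intros; ring. Qed.

Section Conj.
Variable n : nat.
Variable U : Mat.
Hypothesis HU : unitary n U.
Definition cj (X : Mat) : Mat := mmul n (mmul n U X) (madj U).

Lemma UsU : meq n (mmul n (madj U) U) mid.
Proof. constructor; intros i j Hi Hj. apply HU; auto. Qed.
Lemma UUs : meq n (mmul n U (madj U)) mid.
Proof. constructor; intros i j Hi Hj. apply HU; auto. Qed.

Lemma cj_mul X Y : meq n (mmul n (cj X) (cj Y)) (cj (mmul n X Y)).
Proof. unfold cj. rewrite !mmul_assoc.
  rewrite <- (mmul_assoc n (madj U) U). rewrite UsU.
  rewrite <- (mmul_assoc n mid). rewrite mmul_mid_l. reflexivity. Qed.

Lemma cj_sub X Y : cj (msub X Y) = msub (cj X) (cj Y).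
Proof. unfold cj. rewrite mmul_msub_r, mmul_msub_l. reflexivity. Qed.
Lemma cj_add X Y : cj (madd X Y) = madd (cj X) (cj Y).
Proof. unfold cj. rewrite mmul_madd_r, mmul_madd_l. reflexivity. Qed.
Lemma cj_scale c X : cj (mscale c X) = mscale c (cj X).
Proof. unfold cj. rewrite mmul_mscale_r, mmul_mscale_l. reflexivity. Qed.

Lemma cj_comm X Y : meq n (mcomm n (cj X) (cj Y)) (cj (mcomm n X Y)).
Proof. unfold mcomm. rewrite !cj_mul, cj_sub. reflexivity. Qed.
Lemma cj_acomm X Y : meq n (manticomm n (cj X) (cj Y)) (cj (manticomm n X Y)).
Proof. unfold manticomm. rewrite !cj_mul, cj_add. reflexivity. Qed.

Lemma mtr_cj X : mtr n (cj X) = mtr n X.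
Proof. unfold cj. rewrite mtr_comm. rewrite <- mmul_assoc. rewrite UsU.
  rewrite mmul_mid_l. reflexivity. Qed.

Definition uncj (A : Mat) : Mat := mmul n (mmul n (madj U) A) U.
Lemma cj_uncj A : meq n (cj (uncj A)) A.
Proof. unfold cj, uncj. rewrite !mmul_assoc. rewrite UUs. rewrite mmul_mid_r.
  rewrite <- mmul_assoc. rewrite UUs. rewrite mmul_mid_l. reflexivity. Qed.
Lemma cj_mid : meq n (cj mid) mid.
Proof. unfold cj. rewrite mmul_mid_r. apply UUs. Qed.

Lemma uncj_sa A : meq n (madj A) A -> meq n (madj (uncj A)) (uncj A).
Proof. intros H. unfold uncj. rewrite !madj_mmul, madj_madj, H. rewrite mmul_assoc. reflexivity. Qed.
End Conj.

Lemma sa_meq n A : selfadjoint n A -> meq n (madj A) A.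
Proof. intros H; constructor; intros i j Hi Hj. unfold madj. rewrite H; auto. destruct (A i j). unfold Cconj; simpl. f_equal; ring. Qed.

Lemma diag_l n d X i j : (i < n)%nat -> mmul n (diagm d) X i j = Cmul (RtoC (d i)) (X i j).
Proof. intros Hi. unfold mmul, diagm.
  rewrite <- (csum_delta n i (fun k => Cmul (RtoC (d k)) (X k j))) by auto.
  apply csum_ext; intros. destruct (Nat.eqb_spec i k); subst; auto. ring. Qed.
Lemma diag_r n d X i j : (j < n)%nat -> mmul n X (diagm d) i j = Cmul (X i j) (RtoC (d j)).
Proof. intros Hj. unfold mmul, diagm.
  rewrite <- (csum_delta n j (fun k => Cmul (X i k) (RtoC (d k)))) by auto.
  apply csum_ext; intros. rewrite Nat.eqb_sym. destruct (Nat.eqb_spec j k); subst; auto. ring. Qed.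

Lemma tr_formula d X Y h : mtr d (mmul d (mmul d X Y) (diagm h)) =
  csum d (fun j => Cmul (csum d (fun k => Cmul (X j k) (Y k j))) (RtoC (h j))).
Proof. unfold mtr. apply csum_ext; intros j Hj. rewrite diag_r by auto. reflexivity. Qed.

Lemma comm_entry d F a j k : (j < d)%nat -> (k < d)%nat ->
  mcomm d (diagm F) a j k = Cmul (RtoC (F j - F k)) (a j k).
Proof. intros. unfold mcomm, msub. rewrite diag_l, diag_r by auto.
  apply Ceq; simpl; ring. Qed.
Lemma acomm_entry d F a j k : (j < d)%nat -> (k < d)%nat ->
  manticomm d (diagm F) a j k = Cmul (RtoC (F j + F k)) (a j k).
Proof. intros. unfold manticomm, madd. rewrite diag_l, diag_r by auto.
  apply Ceq; simpl; ring. Qed.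

Lemma I_formula d F G Hh a0 :
  (forall j k, (j < d)%nat -> (k < d)%nat -> a0 k j = Cconj (a0 j k)) ->
  Re (mtr d (mmul d (mmul d (mscale Ci (mcomm d (diagm F) a0))
        (mscale Ci (mcomm d (diagm G) a0))) (diagm Hh))) =
  rsum d (fun j => rsum d (fun k => (F j - F k) * (G j - G k) * Hh j * Cnorm2 (a0 j k))).
Proof. intros Hsa. rewrite tr_formula, Re_csum. apply rsum_ext; intros j Hj.
  rewrite <- csum_mul_r, Re_csum. apply rsum_ext; intros k Hk.
  unfold mscale. rewrite !comm_entry by auto. rewrite (Hsa j k) by auto.
  destruct (a0 j k). unfold Cnorm2, Cconj, RtoC; simpl. ring. Qed.

Lemma J_formula d F G Hh a0 :
  (forall j k, (j < d)%nat -> (k < d)%nat -> a0 k j = Cconj (a0 j k)) ->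
  Re (mtr d (mmul d (mmul d (manticomm d (diagm F) a0)
        (manticomm d (diagm G) a0)) (diagm Hh))) =
  rsum d (fun j => rsum d (fun k => (F j + F k) * (G j + G k) * Hh j * Cnorm2 (a0 j k))).
Proof. intros Hsa. rewrite tr_formula, Re_csum. apply rsum_ext; intros j Hj.
  rewrite <- csum_mul_r, Re_csum. apply rsum_ext; intros k Hk.
  rewrite !acomm_entry by auto. rewrite (Hsa j k) by auto.
  destruct (a0 j k). unfold Cnorm2, Cconj, RtoC; simpl. ring. Qed.

Lemma sym_sum d (X : nat -> nat -> R) (h : nat -> R) :
  (forall j k, (j < d)%nat -> (k < d)%nat -> X j k = X k j) ->
  rsum d (fun j => rsum d (fun k => X j k * h j)) =
  rsum d (fun j => rsum d (fun k => X j k * ((h j + h k) / 2))).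
Proof. intros Hs.
  assert (E : rsum d (fun j => rsum d (fun k => X j k * h k)) =
              rsum d (fun j => rsum d (fun k => X j k * h j))).
  { rewrite rsum_swap. apply rsum_ext; intros; apply rsum_ext; intros. rewrite Hs; auto. }
  assert (L : forall n (f g : nat -> R), rsum n (fun k => f k + g k) = rsum n f + rsum n g).
  { induction n; simpl; intros. ring. rewrite IHn. ring. }
  assert (Lm : forall n c (f : nat -> R), rsum n (fun k => c * f k) = c * rsum n f).
  { induction n; simpl; intros. ring. rewrite IHn. ring. }
  transitivity (/2 * (rsum d (fun j => rsum d (fun k => X j k * h j)) +
                      rsum d (fun j => rsum d (fun k => X j k * h k)))).
  rewrite E. field.
  rewrite <- L, <- Lm. apply rsum_ext; intros. rewrite <- L, <- Lm. apply rsum_ext; intros. field.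
Qed.

Lemma cs1 n (t : nat -> C) (P Q : nat -> R) b : 0 <= b ->
  (forall k, (k < n)%nat -> 0 <= P k /\ 0 <= Q k /\ b * Cnorm2 (t k) <= P k * Q k) ->
  0 <= rsum n P /\ 0 <= rsum n Q /\ b * Cnorm2 (csum n t) <= rsum n P * rsum n Q.
Proof. intros Hb. induction n; intros H.
  - simpl. unfold Cnorm2, C0, RtoC; simpl. lra.
  - destruct IHn as [H1 [H2 H3]]. intros; apply H; lia.
    destruct (H n ltac:(lia)) as [H4 [H5 H6]]. simpl.
    set (SP := rsum n P) in *. set (SQ := rsum n Q) in *.
    set (T := csum n t) in *. set (x := t n) in *. set (p := P n) in *. set (q := Q n) in *.
    split; [lra|split;[lra|]].
    destruct T as [T1 T2]; destruct x as [x1 x2]. unfold Cnorm2 in *; simpl in *.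
    set (w := b * (T1 * x1 + T2 * x2)).
    assert (Hw : w * w <= (SP * q) * (p * SQ)).
    { assert (Lg : (T1 * x1 + T2 * x2) * (T1 * x1 + T2 * x2) <=
         (T1 * T1 + T2 * T2) * (x1 * x1 + x2 * x2)).
      { assert (0 <= (T1*x2 - T2*x1)*(T1*x2 - T2*x1)) by apply Rle_0_sqr. nra. }
      assert (0 <= b * (T1 * T1 + T2 * T2)).
      { apply Rmult_le_pos; auto. assert (0 <= T1*T1) by apply Rle_0_sqr. assert (0 <= T2*T2) by apply Rle_0_sqr. lra. }
      assert (0 <= b * (x1 * x1 + x2 * x2)).
      { apply Rmult_le_pos; auto. assert (0 <= x1*x1) by apply Rle_0_sqr. assert (0 <= x2*x2) by apply Rle_0_sqr. lra. }
      assert (E1 : w * w = b * b * ((T1 * x1 + T2 * x2) * (T1 * x1 + T2 * x2))) by (unfold w; ring).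
      assert (E2 : b*b*((T1 * T1 + T2 * T2) * (x1 * x1 + x2 * x2)) = (b * (T1 * T1 + T2 * T2)) * (b * (x1 * x1 + x2 * x2))) by ring.
      assert (E3 : (b * (T1 * T1 + T2 * T2)) * (b * (x1 * x1 + x2 * x2)) <= (SP*SQ) * (p*q)).
      { apply Rmult_le_compat; auto. }
      assert (b*b*((T1 * x1 + T2 * x2) * (T1 * x1 + T2 * x2)) <= b*b*((T1 * T1 + T2 * T2) * (x1 * x1 + x2 * x2))).
      { apply Rmult_le_compat_l; auto. apply Rmult_le_pos; auto. }
      nra. }
    assert (HA : 0 <= SP * q) by (apply Rmult_le_pos; auto).
    assert (HB : 0 <= p * SQ) by (apply Rmult_le_pos; auto).
    assert (Hw2 : 2 * w <= SP * q + p * SQ).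
    { destruct (Rle_dec (2*w) (SP * q + p * SQ)); auto.
      assert (0 <= (SP*q - p*SQ)*(SP*q - p*SQ)) by apply Rle_0_sqr. nra. }
    assert (E : b * ((T1 + x1) * (T1 + x1) + (T2 + x2) * (T2 + x2)) =
      b * (T1 * T1 + T2 * T2) + 2 * w + b * (x1 * x1 + x2 * x2)) by (unfold w; ring).
    rewrite E. nra.
Qed.

Lemma cs2 n (t : nat -> nat -> C) (P Q : nat -> nat -> R) b : 0 <= b ->
  (forall j k, (j < n)%nat -> (k < n)%nat -> 0 <= P j k /\ 0 <= Q j k /\ b * Cnorm2 (t j k) <= P j k * Q j k) ->
  b * Cnorm2 (csum n (fun j => csum n (fun k => t j k))) <=
  rsum n (fun j => rsum n (fun k => P j k)) * rsum n (fun j => rsum n (fun k => Q j k)).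
Proof. intros Hb H. apply cs1; auto. intros j Hj. apply cs1; auto. Qed.

Lemma rsum_add n (f g : nat -> R) : rsum n (fun k => f k + g k) = rsum n f + rsum n g.
Proof. induction n; simpl; intros. ring. rewrite IHn. ring. Qed.
Lemma rsum_scal n c (f : nat -> R) : rsum n (fun k => c * f k) = c * rsum n f.
Proof. induction n; simpl; intros. ring. rewrite IHn. ring. Qed.

Section Main.
Variables (d : nat) (U : Mat) (lam : nat -> R).
Hypothesis HU : unitary d U.

Definition Dg (phi : R -> R) : Mat := diagm (fun k => phi (lam k)).
Definition rho0 := fcalc d U lam (fun x => x).

Lemma fcalc_cj phi : fcalc d U lam phi = cj d U (Dg phi).
Proof. reflexivity. Qed.

Definition cc (A : Mat) : C := mtr d (mmul d rho0 A).
Definition a0 (A : Mat) : Mat := msub (uncj d U A) (mscale (cc A) mid).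

Lemma centered_eq A : meq d (centered d rho0 A) (cj d U (a0 A)).
Proof. unfold centered, a0. rewrite cj_sub, cj_scale by auto.
  apply msub_proper. symmetry; apply cj_uncj; auto.
  apply mscale_proper. symmetry; apply cj_mid; auto. Qed.

Lemma Ifun_eq (f g h : R -> R) A :
  Ifun d rho0 (fcalc d U lam f) (fcalc d U lam g) (fcalc d U lam h) A =
  / 2 * Re (mtr d (mmul d (mmul d (mscale Ci (mcomm d (Dg f) (a0 A)))
        (mscale Ci (mcomm d (Dg g) (a0 A)))) (Dg h))).
Proof. unfold Ifun. cbv zeta. f_equal. f_equal.
  rewrite centered_eq. rewrite !fcalc_cj.
  rewrite !cj_comm by auto. rewrite <- !cj_scale by auto.
  rewrite !cj_mul by auto. apply mtr_cj; auto. Qed.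

Lemma Jfun_eq (f g h : R -> R) A :
  Jfun d rho0 (fcalc d U lam f) (fcalc d U lam g) (fcalc d U lam h) A =
  / 2 * Re (mtr d (mmul d (mmul d (manticomm d (Dg f) (a0 A))
        (manticomm d (Dg g) (a0 A))) (Dg h))).
Proof. unfold Jfun. cbv zeta. f_equal. f_equal.
  rewrite centered_eq. rewrite !fcalc_cj.
  rewrite !cj_acomm by auto.
  rewrite !cj_mul by auto. apply mtr_cj; auto. Qed.

Lemma Tr_eq (f g h : R -> R) A B :
  mtr d (mmul d (mmul d (mmul d (fcalc d U lam f) (fcalc d U lam g)) (fcalc d U lam h)) (mcomm d A B)) =
  csum d (fun j => csum d (fun k =>
    Cmul (RtoC (f (lam j) * g (lam j) * h (lam j) - f (lam k) * g (lam k) * h (lam k)))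
         (Cmul (uncj d U A j k) (uncj d U B k j)))).
Proof.
  assert (E1 : meq d (mmul d (mmul d (fcalc d U lam f) (fcalc d U lam g)) (fcalc d U lam h))
                     (cj d U (mmul d (mmul d (Dg f) (Dg g)) (Dg h)))).
  { rewrite !fcalc_cj. rewrite !cj_mul by auto. reflexivity. }
  assert (E2 : meq d (mcomm d A B) (cj d U (mcomm d (uncj d U A) (uncj d U B)))).
  { rewrite <- cj_comm by auto. apply mcomm_proper; symmetry; apply cj_uncj; auto. }
  rewrite E1, E2. rewrite cj_mul by auto. rewrite mtr_cj by auto.
  set (a := uncj d U A). set (b := uncj d U B).
  rewrite !mmul_assoc. unfold mtr.
  transitivity (csum d (fun j => Cadd
     (csum d (fun k => Cmul (RtoC (f (lam j) * g (lam j) * h (lam j))) (Cmul (a j k) (b k j))))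
     (Copp (csum d (fun k => Cmul (RtoC (f (lam j) * g (lam j) * h (lam j))) (Cmul (b j k) (a k j))))))).
  { apply csum_ext; intros j Hj. unfold Dg. rewrite !diag_l by auto.
    unfold mcomm, msub, mmul. rewrite !csum_mul_l.
    apply Ceq; simpl; ring. }
  rewrite csum_add, csum_opp.
  rewrite (csum_swap d d (fun j k => Cmul (RtoC (f (lam j) * g (lam j) * h (lam j))) (Cmul (b j k) (a k j)))).
  rewrite <- csum_opp, <- csum_add. apply csum_ext; intros j Hj.
  rewrite <- csum_opp, <- csum_add. apply csum_ext; intros k Hk.
  apply Ceq; simpl; ring.
Qed.

Lemma uncj_conj A : selfadjoint d A -> forall j k, (j < d)%nat -> (k < d)%nat ->
  uncj d U A k j = Cconj (uncj d U A j k).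
Proof. intros HA j k Hj Hk.
  assert (H := meq_ap (uncj_sa d U A (sa_meq d A HA)) j k Hj Hk).
  unfold madj in H. rewrite <- H. destruct (uncj d U A k j); unfold Cconj; simpl; f_equal; ring.
Qed.

Lemma cc_real A : selfadjoint d A -> Im (cc A) = 0.
Proof. intros HA. unfold cc, rho0. rewrite fcalc_cj.
  rewrite <- (mtr_proper d _ _ (mmul_proper d _ _ (reflexivity _) _ _ (cj_uncj d U HU A))).
  rewrite cj_mul by auto. rewrite mtr_cj by auto. unfold mtr.
  assert (G : forall n (F : nat -> C), (forall k, (k < n)%nat -> Im (F k) = 0) -> Im (csum n F) = 0).
  { induction n; simpl; intros F HF. reflexivity. rewrite IHn, HF; auto. ring. }
  apply G. intros k Hk. unfold Dg. rewrite diag_l by auto.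
  assert (Hr := uncj_conj A HA k k Hk Hk).
  destruct (uncj d U A k k) as [x y]. unfold Cconj in Hr. simpl in *. injection Hr. intros. simpl. nra.
Qed.

Lemma a0_conj A : selfadjoint d A -> forall j k, (j < d)%nat -> (k < d)%nat ->
  a0 A k j = Cconj (a0 A j k).
Proof. intros HA j k Hj Hk. unfold a0, msub, mscale. rewrite (uncj_conj A HA j k) by auto.
  assert (Hc := cc_real A HA). unfold mid. rewrite Nat.eqb_sym.
  destruct (cc A) as [x y]; simpl in Hc; subst.
  destruct (uncj d U A j k). destruct (Nat.eqb j k); unfold Cconj, C1, C0, RtoC; simpl; apply Ceq; simpl; ring.
Qed.

Lemma a0_off A j k : j <> k -> a0 A j k = uncj d U A j k.
Proof. intros H. unfold a0, msub, mscale, mid. destruct (Nat.eqb_spec j k). contradiction.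
  apply Ceq; unfold C0, RtoC; simpl; ring. Qed.

Lemma Cnorm2_conj z : Cnorm2 (Cconj z) = Cnorm2 z.
Proof. destruct z; unfold Cnorm2; simpl; ring. Qed.

Lemma I_val (f g h : R -> R) A : selfadjoint d A ->
  Ifun d rho0 (fcalc d U lam f) (fcalc d U lam g) (fcalc d U lam h) A =
  rsum d (fun j => rsum d (fun k =>
    (f (lam j) - f (lam k)) * (g (lam j) - g (lam k)) * (h (lam j) + h (lam k)) / 4 * Cnorm2 (a0 A j k))).
Proof. intros HA. rewrite Ifun_eq. unfold Dg. rewrite I_formula by (apply a0_conj; auto).
  rewrite (rsum_ext d _ (fun j => rsum d (fun k =>
     ((f (lam j) - f (lam k)) * (g (lam j) - g (lam k)) * Cnorm2 (a0 A j k)) * h (lam j)))).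
  2:{ intros; apply rsum_ext; intros; ring. }
  rewrite sym_sum.
  2:{ intros j k Hj Hk. rewrite (a0_conj A HA j k) by auto. rewrite Cnorm2_conj. ring. }
  rewrite <- rsum_scal. apply rsum_ext; intros. rewrite <- rsum_scal. apply rsum_ext; intros. field.
Qed.

Lemma J_val (f g h : R -> R) A : selfadjoint d A ->
  Jfun d rho0 (fcalc d U lam f) (fcalc d U lam g) (fcalc d U lam h) A =
  rsum d (fun j => rsum d (fun k =>
    (f (lam j) + f (lam k)) * (g (lam j) + g (lam k)) * (h (lam j) + h (lam k)) / 4 * Cnorm2 (a0 A j k))).
Proof. intros HA. rewrite Jfun_eq. unfold Dg. rewrite J_formula by (apply a0_conj; auto).
  rewrite (rsum_ext d _ (fun j => rsum d (fun k =>
     ((f (lam j) + f (lam k)) * (g (lam j) + g (lam k)) * Cnorm2 (a0 A j k)) * h (lam j)))).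
  2:{ intros; apply rsum_ext; intros; ring. }
  rewrite sym_sum.
  2:{ intros j k Hj Hk. rewrite (a0_conj A HA j k) by auto. rewrite Cnorm2_conj. ring. }
  rewrite <- rsum_scal. apply rsum_ext; intros. rewrite <- rsum_scal. apply rsum_ext; intros. field.
Qed.

End Main.

Definition cl (z : R) : R := Rmax 0 (Rmin z 1).
Lemma cl_id z : 0 <= z <= 1 -> cl z = z.
Proof. intros. unfold cl. rewrite Rmin_left by lra. rewrite Rmax_right; lra. Qed.
Lemma cl_in z : 0 <= cl z <= 1.
Proof. unfold cl. unfold Rmax, Rmin. repeat destruct Rle_dec; lra. Qed.
Lemma cl_dist z c : 0 <= c <= 1 -> Rabs (cl z - c) <= Rabs (z - c).
Proof. intros. unfold cl, Rmax, Rmin. repeat destruct Rle_dec; unfold Rabs; repeat destruct Rcase_abs; lra. Qed.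

Lemma cont_cl f : admissible f -> forall c, 0 <= c <= 1 -> continuity_pt (fun z => f (cl z)) c.
Proof. intros [_ [Hc _]] c Hc0. unfold continuity_pt, continue_in, limit1_in, limit_in.
  intros eps Heps. destruct (Hc c Hc0 eps Heps) as [alp [Halp H]].
  exists alp. split; auto. intros z [_ Hz]. simpl in *. unfold R_dist in *.
  rewrite (cl_id c) by lra. apply H. split. apply cl_in.
  unfold R_dist. eapply Rle_lt_trans. apply cl_dist; lra. auto. Qed.

Lemma cont_lnf f : admissible f -> (forall x, 0 < x <= 1 -> 0 < f x) ->
  forall c, 0 < c <= 1 -> continuity_pt (fun z => ln (f (cl z))) c.
Proof. intros Hf Hp c Hc.
  change (continuity_pt (comp ln (fun z => f (cl z))) c).
  apply continuity_pt_comp. apply cont_cl; auto; lra.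
  apply derivable_continuous_pt. exists (/ f (cl c)). apply derivable_pt_lim_ln.
  rewrite cl_id by lra. apply Hp; auto. Qed.

Lemma dpl_local (g1 g2 : R -> R) c l del0 : 0 < del0 ->
  (forall z, Rabs (z - c) < del0 -> g1 z = g2 z) ->
  derivable_pt_lim g2 c l -> derivable_pt_lim g1 c l.
Proof. intros Hd Heq H eps He. destruct (H eps He) as [del Hdel].
  assert (Hp : 0 < Rmin del del0) by (apply Rmin_pos; [apply cond_pos|auto]).
  exists (mkposreal _ Hp). simpl. intros h Hh Hlt.
  rewrite (Heq (c+h)), (Heq c). apply Hdel; auto. eapply Rlt_le_trans; eauto. apply Rmin_l.
  replace (c - c) with 0 by ring. rewrite Rabs_R0; auto.
  replace (c + h - c) with h by ring. eapply Rlt_le_trans; eauto. apply Rmin_r. Qed.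

Lemma der_logf f : admissible f -> (forall x, 0 < x <= 1 -> 0 < f x) ->
  forall c, 0 < c < 1 -> exists a, derivable_pt_lim (logf f) c a /\
     derivable_pt_lim (fun z => ln (f (cl z))) c a.
Proof. intros Hf Hp c Hc. destruct Hf as [_ [_ Hd]]. destruct (Hd c Hc) as [l Hl].
  assert (H1 : derivable_pt_lim (logf f) c (/ f c * l)).
  { change (derivable_pt_lim (comp ln f) c (/ f c * l)). apply derivable_pt_lim_comp; auto.
    apply derivable_pt_lim_ln. apply Hp; lra. }
  exists (/ f c * l). split; auto.
  apply (dpl_local _ (logf f) c _ (Rmin c (1 - c))). apply Rmin_pos; lra.
  intros z Hz. unfold logf. rewrite cl_id; auto.
  assert (Rmin c (1-c) <= c) by apply Rmin_l. assert (Rmin c (1-c) <= 1 - c) by apply Rmin_r.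
  unfold Rabs in Hz; destruct Rcase_abs; lra. auto. Qed.

Lemma cmvt f g : admissible f -> admissible g -> (forall x, 0 < x <= 1 -> 0 < f x) ->
  (forall x, 0 < x <= 1 -> 0 < g x) ->
  forall x y, 0 < x -> x < y -> y <= 1 ->
  exists c a b, x < c < y /\ derivable_pt_lim (logf f) c a /\ derivable_pt_lim (logf g) c b /\
    (logf g y - logf g x) * a = (logf f y - logf f x) * b.
Proof. intros Hf Hg Hpf Hpg x y Hx Hxy Hy.
  set (Ft := fun z => ln (f (cl z))). set (Gt := fun z => ln (g (cl z))).
  assert (pr1 : forall c, x < c < y -> derivable_pt Ft c).
  { intros c Hc. exists (Derive Ft c). destruct (der_logf f Hf Hpf c ltac:(lra)) as [a [_ Ha]].
    replace (Derive Ft c) with a. auto. symmetry. apply is_derive_unique. apply is_derive_Reals. auto. }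
  assert (pr2 : forall c, x < c < y -> derivable_pt Gt c).
  { intros c Hc. exists (Derive Gt c). destruct (der_logf g Hg Hpg c ltac:(lra)) as [a [_ Ha]].
    replace (Derive Gt c) with a. auto. symmetry. apply is_derive_unique. apply is_derive_Reals. auto. }
  destruct (MVT Ft Gt x y pr1 pr2 Hxy) as [c [P Heq]].
  - intros c Hc. apply cont_lnf; auto; lra.
  - intros c Hc. apply cont_lnf; auto; lra.
  - destruct (der_logf f Hf Hpf c ltac:(lra)) as [a [Ha Ha']].
    destruct (der_logf g Hg Hpg c ltac:(lra)) as [b [Hb Hb']].
    exists c, a, b. split; auto. split; auto. split; auto.
    rewrite (derive_pt_eq_0 _ _ _ _ Ha') in Heq. rewrite (derive_pt_eq_0 _ _ _ _ Hb') in Heq.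
    unfold Ft, Gt in Heq. rewrite !cl_id in Heq by lra. unfold logf. lra.
Qed.

Definition q (a b : R) : R := a / (1 + a + b) ^ 2.

Lemma q_nonneg a b : 0 <= a -> 0 <= q a b.
Proof. intros Ha. unfold q, Rdiv. destruct (Req_dec ((1+a+b)^2) 0) as [E|E].
  rewrite E, Rinv_0. lra. apply Rmult_le_pos; auto. left. apply Rinv_0_lt_compat.
  assert (0 <= (1+a+b)^2) by apply pow2_ge_0. lra. Qed.

Lemma div_le a b D1 D : 0 < D1 -> 0 < D -> a * D <= b * D1 -> a / D1 <= b / D.
Proof. intros H1 H2 H. replace (a / D1) with ((a * D) * / (D1 * D)) by (field; lra).
  replace (b / D) with ((b * D1) * / (D1 * D)) by (field; lra).
  apply Rmult_le_compat_r; auto. left. apply Rinv_0_lt_compat. apply Rmult_lt_0_compat; auto. Qed.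

Lemma sq_pos x : x <> 0 -> 0 < x ^ 2.
Proof. intros. apply pow2_gt_0; auto. Qed.

Lemma stepa mu nu n N : n <= nu <= N -> 0 <= mu -> 1 + mu + nu <> 0 ->
  (1 + mu + n <> 0 /\ q mu n <= q mu nu) \/ (1 + mu + N <> 0 /\ q mu N <= q mu nu).
Proof. intros Hn Hmu Hs.
  assert (Hle : forall b, 1 + mu + b <> 0 -> (1+mu+nu)^2 <= (1+mu+b)^2 -> q mu b <= q mu nu).
  { intros b Hb Hsq. unfold q, Rdiv. apply Rmult_le_compat_l; auto.
    apply Rinv_le_contravar; auto. apply sq_pos; auto. }
  destruct (Rlt_dec 0 (1+mu+nu)).
  - right. assert (1+mu+N <> 0) by lra. split; auto. apply Hle; auto.
    apply pow_incr. lra.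
  - left. assert (1+mu+n <> 0) by lra. split; auto. apply Hle; auto.
    replace ((1+mu+nu)^2) with ((-(1+mu+nu))^2) by ring.
    replace ((1+mu+n)^2) with ((-(1+mu+n))^2) by ring.
    apply pow_incr. lra.
Qed.

Lemma stepb m mu M b : 0 <= m -> m <= mu <= M -> 1 + mu + b <> 0 ->
  q m b <= q mu b \/ q M b <= q mu b.
Proof. intros Hm Hr Hs. set (c := 1 + b).
  destruct (Req_dec (1+m+b) 0) as [E|E].
  { left. unfold q at 1. rewrite E. unfold Rdiv. rewrite pow_i by lia. rewrite Rinv_0, Rmult_0_r.
    apply q_nonneg; lra. }
  destruct (Req_dec (1+M+b) 0) as [E2|E2].
  { right. unfold q at 1. rewrite E2. unfold Rdiv. rewrite pow_i by lia. rewrite Rinv_0, Rmult_0_r.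
    apply q_nonneg; lra. }
  assert (D1 := sq_pos _ E). assert (D := sq_pos _ Hs). assert (D2 := sq_pos _ E2).
  unfold q.
  destruct (Rle_dec (m * mu) (c * c)).
  - left. apply div_le; auto.
    assert (Eq : mu * (1 + m + b) ^ 2 - m * (1 + mu + b) ^ 2 = (mu - m) * (c*c - m * mu)) by (unfold c; ring).
    assert (0 <= (mu - m) * (c*c - m*mu)) by (apply Rmult_le_pos; lra). lra.
  - right. apply div_le; auto.
    assert (Eq : mu * (1 + M + b) ^ 2 - M * (1 + mu + b) ^ 2 = (M - mu) * (M * mu - c*c)) by (unfold c; ring).
    assert (m * mu <= M * mu) by (apply Rmult_le_compat_r; lra).
    assert (0 <= (M - mu) * (M*mu - c*c)) by (apply Rmult_le_pos; lra). lra.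
Qed.

Lemma corner m M n N mu nu : 0 <= m -> m <= mu <= M -> n <= nu <= N -> 1 + mu + nu <> 0 ->
  beta m M n N <= mu / (1 + mu + nu) ^ 2.
Proof. intros Hm Hmu Hnu Hs. fold (q mu nu).
  assert (B1 : beta m M n N <= q m n). { unfold beta, q. eapply Rle_trans; apply Rmin_l. }
  assert (B2 : beta m M n N <= q m N). { unfold beta, q. eapply Rle_trans. apply Rmin_l. apply Rmin_r. }
  assert (B3 : beta m M n N <= q M n). { unfold beta, q. eapply Rle_trans. apply Rmin_r. apply Rmin_l. }
  assert (B4 : beta m M n N <= q M N). { unfold beta, q. eapply Rle_trans; apply Rmin_r. }
  destruct (stepa mu nu n N Hnu ltac:(lra) Hs) as [[H1 H2]|[H1 H2]].
  - destruct (stepb m mu M n Hm Hmu H1); lra.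
  - destruct (stepb m mu M N Hm Hmu H1); lra.
Qed.

Lemma ratio_bounds f g m M :
  admissible f -> admissible g -> (forall x, 0 < x <= 1 -> 0 < f x) -> (forall x, 0 < x <= 1 -> 0 < g x) ->
  (forall x a, 0 < x < 1 -> derivable_pt_lim (logf f) x a -> a <> 0) ->
  is_inf (deriv_ratios (logf f) (logf g)) m -> is_sup (deriv_ratios (logf f) (logf g)) M ->
  forall x y, 0 < x -> x < y -> y <= 1 -> logf f y - logf f x <> 0 ->
  m <= (logf g y - logf g x) / (logf f y - logf f x) <= M.
Proof. intros Hf Hg Hpf Hpg Hnz Hm HM x y Hx Hxy Hy Ht.
  destruct (cmvt f g Hf Hg Hpf Hpg x y Hx Hxy Hy) as [c [a [b [Hc [Ha [Hb Heq]]]]]].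
  assert (Ha0 : a <> 0) by (apply (Hnz c a); auto; lra).
  assert (E : (logf g y - logf g x) / (logf f y - logf f x) = b / a).
  { field_simplify_eq; auto. lra. }
  assert (Hin : deriv_ratios (logf f) (logf g) (b / a)).
  { exists c, a, b. repeat split; auto; lra. }
  rewrite E. split. apply Hm; auto. apply HM; auto. Qed.

Lemma exp_logf f x : 0 < f x -> exp (logf f x) = f x.
Proof. intros. unfold logf. apply exp_ln; auto. Qed.

Lemma pair_lt (f g h : R -> R) m M n N
  (Hf : admissible f) (Hg : admissible g) (Hh : admissible h)
  (Hpos : forall x, 0 < x <= 1 -> 0 < f x /\ 0 < g x /\ 0 < h x)
  (HF'nz : forall x a, 0 < x < 1 -> derivable_pt_lim (logf f) x a -> a <> 0)
  (HFinj : forall x y, 0 < x <= 1 -> 0 < y <= 1 -> x <> y -> logf f x <> logf f y)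
  (Hm : is_inf (deriv_ratios (logf f) (logf g)) m)
  (HM : is_sup (deriv_ratios (logf f) (logf g)) M)
  (Hn : is_inf (deriv_ratios (logf f) (logf h)) n)
  (HN : is_sup (deriv_ratios (logf f) (logf h)) N)
  (Hm0 : 0 <= m)
  (Hmono : forall x y, 0 <= x <= 1 -> 0 <= y <= 1 -> 0 <= (f x - f y) * (g x - g y))
  (Hc : (forall x y, 0 < x -> x < y -> y <= 1 ->
          1 + (logf g y - logf g x) / (logf f y - logf f x)
          <= (logf h y - logf h x) / (logf f y - logf f x))
        \/ (N <= 0 /\ forall x y, 0 < x -> x < y -> y <= 1 ->
        0 <= 1 + (logf g y - logf g x) / (logf f y - logf f x)
               + (logf h y - logf h x) / (logf f y - logf f x)))
  x y : 0 < x -> x < y -> y <= 1 ->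
  16 * beta m M n N * (f x * g x * h x - f y * g y * h y) ^ 2 <=
  (f x ^ 2 - f y ^ 2) * (g x ^ 2 - g y ^ 2) * (h x + h y) ^ 2.
Proof. intros Hx Hxy Hy.
  assert (Hpf : forall z, 0 < z <= 1 -> 0 < f z) by (intros; apply Hpos; auto).
  assert (Hpg : forall z, 0 < z <= 1 -> 0 < g z) by (intros; apply Hpos; auto).
  assert (Hph : forall z, 0 < z <= 1 -> 0 < h z) by (intros; apply Hpos; auto).
  set (t := logf f y - logf f x).
  assert (Ht : t <> 0) by (unfold t; intro E; apply (HFinj y x); lra).
  set (mu := (logf g y - logf g x) / t). set (nu := (logf h y - logf h x) / t).
  assert (Hmu : m <= mu <= M) by (apply (ratio_bounds f g); auto).
  assert (Hnu : n <= nu <= N) by (apply (ratio_bounds f h); auto).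
  assert (Hfx := Hpf x ltac:(lra)). assert (Hgx := Hpg x ltac:(lra)). assert (Hhx := Hph x ltac:(lra)).
  assert (Hfy := Hpf y ltac:(lra)). assert (Hgy := Hpg y ltac:(lra)). assert (Hhy := Hph y ltac:(lra)).
  assert (Ey : f y = f x * exp t).
  { rewrite <- (exp_logf f y), <- (exp_logf f x) by auto. rewrite <- exp_plus. f_equal. unfold t; ring. }
  assert (Eg : g y = g x * exp (mu * t)).
  { rewrite <- (exp_logf g y), <- (exp_logf g x) by auto. rewrite <- exp_plus. f_equal. unfold mu. field. auto. }
  assert (Eh : h y = h x * exp (nu * t)).
  { rewrite <- (exp_logf h y), <- (exp_logf h x) by auto. rewrite <- exp_plus. f_equal. unfold nu. field. auto. }
  assert (RHS0 : 0 <= (f x ^ 2 - f y ^ 2) * (g x ^ 2 - g y ^ 2) * (h x + h y) ^ 2).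
  { assert (H1 := Hmono x y ltac:(lra) ltac:(lra)).
    replace ((f x ^ 2 - f y ^ 2) * (g x ^ 2 - g y ^ 2)) with
      (((f x - f y) * (g x - g y)) * ((f x + f y) * (g x + g y))) by ring.
    apply Rmult_le_pos; [|apply pow2_ge_0]. apply Rmult_le_pos; auto.
    apply Rmult_le_pos; lra. }
  set (s := 1 + mu + nu).
  assert (Es : exp (s * t) = exp t * exp (mu * t) * exp (nu * t)).
  { rewrite <- !exp_plus. f_equal. unfold s; ring. }
  assert (Hcond : 1 + mu <= nu \/ (nu <= 0 /\ 0 <= 1 + mu + nu)).
  { destruct Hc as [Hc|[HN0 Hc]]. left. apply Hc; auto. right. split. lra. apply Hc; auto. }
  destruct (Req_dec s 0) as [Hs0|Hs0].
  { assert (E1 : exp t * exp (mu * t) * exp (nu * t) = 1).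
    { rewrite <- Es, Hs0, Rmult_0_l. apply exp_0. }
    replace (f x * g x * h x - f y * g y * h y) with 0.
    2:{ rewrite Ey, Eg, Eh. replace (f x * exp t * (g x * exp (mu * t)) * (h x * exp (nu * t)))
        with (f x * g x * h x * (exp t * exp (mu * t) * exp (nu * t))) by ring. rewrite E1. ring. }
    replace (16 * beta m M n N * 0 ^ 2) with 0 by ring. auto. }
  assert (Hb := corner m M n N mu nu Hm0 Hmu Hnu Hs0).
  assert (Han := analytic t mu nu ltac:(lra) Hcond).
  fold s in Han, Hb.
  set (X := exp t) in *. set (Y := exp (mu * t)) in *. set (Z := exp (nu * t)) in *.
  assert (EX2 : exp (2 * t) = X * X) by (unfold X; rewrite <- exp_plus; f_equal; ring).
  assert (EY2 : exp (2 * (mu * t)) = Y * Y) by (unfold Y; rewrite <- exp_plus; f_equal; ring).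
  rewrite EX2, EY2, Es in Han.
  set (W := (X * X - 1) * (Y * Y - 1) * (Z + 1) ^ 2) in *.
  set (E := (X * Y * Z - 1) ^ 2) in *.
  assert (HE : 0 <= E) by apply pow2_ge_0.
  assert (Hs2 : 0 < s ^ 2) by (apply pow2_gt_0; auto).
  assert (Han2 : 16 * (mu / s ^ 2) * E <= W).
  { replace (16 * (mu / s ^ 2) * E) with ((16 * mu * E) / s ^ 2) by (field; auto).
    unfold Rdiv. apply Rmult_le_reg_r with (s ^ 2); auto.
    replace (16 * mu * E * / s ^ 2 * s ^ 2) with (16 * mu * E) by (field; auto).
    replace (W * s^2) with (s^2 * (X * X - 1) * (Y * Y - 1) * (Z + 1) ^ 2) by (unfold W; ring). auto. }
  assert (Hb2 : 16 * beta m M n N * E <= 16 * (mu / s ^ 2) * E).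
  { apply Rmult_le_compat_r; auto. lra. }
  set (K := (f x * g x * h x) ^ 2).
  assert (HK : 0 <= K) by apply pow2_ge_0.
  replace (16 * beta m M n N * (f x * g x * h x - f y * g y * h y) ^ 2) with (K * (16 * beta m M n N * E)).
  2:{ unfold K, E. rewrite Ey, Eg, Eh. ring. }
  replace ((f x ^ 2 - f y ^ 2) * (g x ^ 2 - g y ^ 2) * (h x + h y) ^ 2) with (K * W).
  2:{ unfold K, W. rewrite Ey, Eg, Eh. ring. }
  apply Rmult_le_compat_l; auto. lra.
Qed.

Lemma rsum_nonneg n f : (forall k, (k < n)%nat -> 0 <= f k) -> 0 <= rsum n f.
Proof. induction n; simpl; intros H. lra. assert (0 <= f n) by (apply H; lia).
  assert (0 <= rsum n f) by (apply IHn; intros; apply H; lia). lra. Qed.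

Lemma rsum_ge_term n f k : (k < n)%nat -> (forall i, (i < n)%nat -> 0 <= f i) -> f k <= rsum n f.
Proof. induction n; intros Hk H. lia. simpl.
  destruct (Nat.eq_dec k n) as [->|Hne].
  - assert (0 <= rsum n f) by (apply rsum_nonneg; intros; apply H; lia). lra.
  - assert (f k <= rsum n f) by (apply IHn; [lia|intros; apply H; lia]).
    assert (0 <= f n) by (apply H; lia). lra. Qed.

Theorem theorem3p1
  (f g h : R -> R)
  (Hf : admissible f) (Hg : admissible g) (Hh : admissible h)
  (Hpos : forall x, 0 < x <= 1 -> 0 < f x /\ 0 < g x /\ 0 < h x)
  (HF'nz : forall x a, 0 < x < 1 -> derivable_pt_lim (logf f) x a -> a <> 0)
  (HFinj : forall x y, 0 < x <= 1 -> 0 < y <= 1 -> x <> y -> logf f x <> logf f y)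
  (m M n N : R)
  (Hm : is_inf (deriv_ratios (logf f) (logf g)) m)
  (HM : is_sup (deriv_ratios (logf f) (logf g)) M)
  (Hn : is_inf (deriv_ratios (logf f) (logf h)) n)
  (HN : is_sup (deriv_ratios (logf f) (logf h)) N)
  (Hcase :
     (CLI_monotone f g /\ CLI_monotone f h /\
      forall x y, 0 < x -> x < y -> y <= 1 ->
        1 + (logf g y - logf g x) / (logf f y - logf f x)
          <= (logf h y - logf h x) / (logf f y - logf f x))
     \/
     (CLI_monotone f g /\ CLI_antimonotone f h /\
      forall x y, 0 < x -> x < y -> y <= 1 ->
        0 <= 1 + (logf g y - logf g x) / (logf f y - logf f x)
               + (logf h y - logf h x) / (logf f y - logf f x)))
  (d : nat) (U : Mat) (lam : nat -> R)
  (Hrho : density_spectral d U lam)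
  (A B : Mat) (HA : selfadjoint d A) (HB : selfadjoint d B) :
  let rho := fcalc d U lam (fun x => x) in
  let fr := fcalc d U lam f in
  let gr := fcalc d U lam g in
  let hr := fcalc d U lam h in
  Ufun d rho fr gr hr A * Ufun d rho fr gr hr B >=
    beta m M n N * Cnorm2 (mtr d (mmul d (mmul d (mmul d fr gr) hr) (mcomm d A B))).
Proof.
  intros rho fr gr hr.
  destruct Hrho as [HU [Hlam Hsum]].
  assert (Hlam1 : forall k, (k < d)%nat -> 0 < lam k <= 1).
  { intros k Hk. split. auto. rewrite <- Hsum. apply rsum_ge_term; auto. intros; left; auto. }
  assert (HmonoCLI : CLI_monotone f g) by (destruct Hcase as [[H _]|[H _]]; auto).
  destruct HmonoCLI as [Hmono [m' [M' [Hm' [_ Hm'0]]]]].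
  assert (Hm0 : 0 <= m).
  { assert (m' <= m) by (apply Hm; apply Hm'). lra. }
  assert (Hc' : (forall x y, 0 < x -> x < y -> y <= 1 ->
          1 + (logf g y - logf g x) / (logf f y - logf f x)
          <= (logf h y - logf h x) / (logf f y - logf f x))
        \/ (N <= 0 /\ forall x y, 0 < x -> x < y -> y <= 1 ->
        0 <= 1 + (logf g y - logf g x) / (logf f y - logf f x)
               + (logf h y - logf h x) / (logf f y - logf f x))).
  { destruct Hcase as [[_ [_ H]]|[_ [[_ [m2 [M2 [_ [HM2 HM20]]]]] H]]].
    left; auto. right. split; auto.
    assert (N <= M2) by (apply HN; apply HM2). lra. }
  assert (Hpair : forall x y, 0 < x <= 1 -> 0 < y <= 1 ->
    16 * beta m M n N * (f x * g x * h x - f y * g y * h y) ^ 2 <=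
    (f x ^ 2 - f y ^ 2) * (g x ^ 2 - g y ^ 2) * (h x + h y) ^ 2).
  { intros x y Hx Hy. destruct (Rtotal_order x y) as [Hxy|[Hxy|Hxy]].
    - apply (pair_lt f g h m M n N); auto; lra.
    - subst. replace (f y * g y * h y - f y * g y * h y) with 0 by ring.
      replace (f y ^ 2 - f y ^ 2) with 0 by ring. lra.
    - assert (H := pair_lt f g h m M n N Hf Hg Hh Hpos HF'nz HFinj Hm HM Hn HN Hm0 Hmono Hc' y x
        ltac:(lra) Hxy ltac:(lra)).
      replace ((f x * g x * h x - f y * g y * h y) ^ 2) with ((f y * g y * h y - f x * g x * h x) ^ 2) by ring.
      replace ((f x ^ 2 - f y ^ 2) * (g x ^ 2 - g y ^ 2) * (h x + h y) ^ 2) with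
        ((f y ^ 2 - f x ^ 2) * (g y ^ 2 - g x ^ 2) * (h y + h x) ^ 2) by ring. auto. }
  unfold Ufun. unfold fr, gr, hr.
  change rho with (rho0 d U lam).
  rewrite Tr_eq by auto.
  rewrite !I_val, !J_val by auto.
  set (fj := fun j => f (lam j)). set (gj := fun j => g (lam j)). set (hj := fun j => h (lam j)).
  set (al := fun j k => (f (lam j) - f (lam k)) * (g (lam j) - g (lam k)) * (h (lam j) + h (lam k)) / 4).
  set (ga := fun j k => (f (lam j) + f (lam k)) * (g (lam j) + g (lam k)) * (h (lam j) + h (lam k)) / 4).
  assert (Hal : forall j k, (j < d)%nat -> (k < d)%nat -> 0 <= al j k).
  { intros j k Hj Hk. unfold al. destruct (Hlam1 j Hj), (Hlam1 k Hk).
    destruct (Hpos (lam j)) as [? [? ?]]; auto. destruct (Hpos (lam k)) as [? [? ?]]; auto.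
    assert (0 <= (f (lam j) - f (lam k)) * (g (lam j) - g (lam k))) by (apply Hmono; lra).
    unfold Rdiv. apply Rmult_le_pos; [|lra]. apply Rmult_le_pos; lra. }
  assert (Hga : forall j k, (j < d)%nat -> (k < d)%nat -> 0 <= ga j k).
  { intros j k Hj Hk. unfold ga. destruct (Hlam1 j Hj), (Hlam1 k Hk).
    destruct (Hpos (lam j)) as [? [? ?]]; auto. destruct (Hpos (lam k)) as [? [? ?]]; auto.
    unfold Rdiv. apply Rmult_le_pos; [|lra]. repeat apply Rmult_le_pos; lra. }
  assert (Hcn : forall z, 0 <= Cnorm2 z).
  { intros [x y]. unfold Cnorm2; simpl. assert (0 <= x*x) by apply Rle_0_sqr. assert (0 <= y*y) by apply Rle_0_sqr. lra. }
  set (IA := rsum d (fun j => rsum d (fun k => al j k * Cnorm2 (a0 d U lam A j k)))).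
  set (JA := rsum d (fun j => rsum d (fun k => ga j k * Cnorm2 (a0 d U lam A j k)))).
  set (IB := rsum d (fun j => rsum d (fun k => al j k * Cnorm2 (a0 d U lam B j k)))).
  set (JB := rsum d (fun j => rsum d (fun k => ga j k * Cnorm2 (a0 d U lam B j k)))).
  change (sqrt (IA * JA) * sqrt (IB * JB) >=
    beta m M n N * Cnorm2 (csum d (fun j => csum d (fun k =>
      Cmul (RtoC (f (lam j) * g (lam j) * h (lam j) - f (lam k) * g (lam k) * h (lam k)))
        (Cmul (uncj d U A j k) (uncj d U B k j)))))).
  set (T := csum d _).
  assert (HIA : 0 <= IA) by (apply rsum_nonneg; intros; apply rsum_nonneg; intros; apply Rmult_le_pos; auto).
  assert (HJA : 0 <= JA) by (apply rsum_nonneg; intros; apply rsum_nonneg; intros; apply Rmult_le_pos; auto).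
  assert (HIB : 0 <= IB) by (apply rsum_nonneg; intros; apply rsum_nonneg; intros; apply Rmult_le_pos; auto).
  assert (HJB : 0 <= JB) by (apply rsum_nonneg; intros; apply rsum_nonneg; intros; apply Rmult_le_pos; auto).
  assert (Hs0 : 0 <= sqrt (IA * JA) * sqrt (IB * JB)) by (apply Rmult_le_pos; apply sqrt_pos).
  destruct (Rle_dec (beta m M n N) 0) as [Hb|Hb].
  { assert (0 <= Cnorm2 T) by apply Hcn.
    assert (beta m M n N * Cnorm2 T <= 0 * Cnorm2 T) by (apply Rmult_le_compat_r; lra). lra. }
  assert (Hbp : 0 < beta m M n N) by lra.
  set (tt := fun j k => Cmul (RtoC (f (lam j) * g (lam j) * h (lam j) - f (lam k) * g (lam k) * h (lam k)))
        (Cmul (uncj d U A j k) (uncj d U B k j))).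
  assert (ET : T = csum d (fun j => csum d (fun k => tt j k))) by reflexivity.
  assert (Cn_mul : forall x y, Cnorm2 (Cmul x y) = Cnorm2 x * Cnorm2 y).
  { intros [x1 x2] [y1 y2]. unfold Cnorm2; simpl. ring. }
  assert (Core : forall j k, (j < d)%nat -> (k < d)%nat ->
     beta m M n N * Cnorm2 (tt j k) <= al j k * ga j k * Cnorm2 (a0 d U lam A j k) * Cnorm2 (a0 d U lam B j k)).
  { intros j k Hj Hk. unfold tt. rewrite !Cn_mul.
    assert (HR : forall r, Cnorm2 (RtoC r) = r ^ 2) by (intros; unfold Cnorm2, RtoC; simpl; ring).
    rewrite HR.
    assert (0 <= al j k * ga j k * Cnorm2 (a0 d U lam A j k) * Cnorm2 (a0 d U lam B j k)).
    { apply Rmult_le_pos; [apply Rmult_le_pos; [apply Rmult_le_pos|]|]; auto. }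
    destruct (Nat.eq_dec j k) as [<-|Hne].
    - replace (f (lam j) * g (lam j) * h (lam j) - f (lam j) * g (lam j) * h (lam j)) with 0 by ring.
      replace (0 ^ 2) with 0 by ring. rewrite Rmult_0_l, !Rmult_0_r. auto.
    - rewrite <- (a0_off d U lam A j k Hne).
      rewrite <- (a0_off d U lam B k j ltac:(auto)).
      rewrite (a0_conj d U lam HU B HB j k Hj Hk), Cnorm2_conj.
      destruct (Hlam1 j Hj), (Hlam1 k Hk).
      assert (HP := Hpair (lam j) (lam k) ltac:(lra) ltac:(lra)).
      assert (Eq : (f (lam j) ^ 2 - f (lam k) ^ 2) * (g (lam j) ^ 2 - g (lam k) ^ 2) * (h (lam j) + h (lam k)) ^ 2
                   = 16 * (al j k * ga j k)) by (unfold al, ga; field).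
      rewrite Eq in HP.
      assert (HP2 : beta m M n N * (f (lam j) * g (lam j) * h (lam j) - f (lam k) * g (lam k) * h (lam k)) ^ 2 <= al j k * ga j k) by lra.
      assert (Hca := Hcn (a0 d U lam A j k)). assert (Hcb := Hcn (a0 d U lam B j k)).
      set (pp := (f (lam j) * g (lam j) * h (lam j) - f (lam k) * g (lam k) * h (lam k))) in *.
      set (ca := Cnorm2 (a0 d U lam A j k)) in *. set (cb := Cnorm2 (a0 d U lam B j k)) in *.
      apply Rle_trans with ((beta m M n N * pp ^ 2) * (ca * cb)). right; ring.
      apply Rle_trans with ((al j k * ga j k) * (ca * cb)). 2:{ right; ring. }
      apply Rmult_le_compat_r; auto. apply Rmult_le_pos; auto. }
  assert (H1 : beta m M n N * Cnorm2 T <= IA * JB).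
  { rewrite ET. apply cs2. lra. intros j k Hj Hk. split; [apply Rmult_le_pos; auto|].
    split; [apply Rmult_le_pos; auto|]. eapply Rle_trans. apply Core; auto. right; ring. }
  assert (H2 : beta m M n N * Cnorm2 T <= JA * IB).
  { rewrite ET. apply cs2. lra. intros j k Hj Hk. split; [apply Rmult_le_pos; auto|].
    split; [apply Rmult_le_pos; auto|]. eapply Rle_trans. apply Core; auto. right; ring. }
  assert (HT0 : 0 <= beta m M n N * Cnorm2 T) by (apply Rmult_le_pos; [lra | apply Hcn]).
  rewrite <- sqrt_mult by (apply Rmult_le_pos; auto).
  apply Rle_ge. rewrite <- (sqrt_pow2 (beta m M n N * Cnorm2 T)) by auto.
  apply sqrt_le_1_alt.
  replace (IA * JA * (IB * JB)) with ((IA * JB) * (JA * IB)) by ring.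
  simpl. rewrite Rmult_1_r. apply Rmult_le_compat; auto.
Qed.
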